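(* There is an absolute constant $C>0$ such that for every finite field $\mathbb{F}_q$ with $q$ elements and every Nikodym set $B\subset\mathbb{F}_q^2$ (i.e. for every $x\in\mathbb{F}_q^2\setminus B$ there exists a line $L\subset\mathbb{F}_q^2$ with $L\cap(\mathbb{F}_q^2\setminus B)=\{x\}$), one has \[|B|\ge \frac{2q^2}{3}-Cq.\] (That is, $|B|\ge \frac{2q^2}{3}+O(q)$ as $q\to\infty$.)
   Context: A line in $\mathbb{F}_q^2$ is a set of the form $\{a+tb: t\in\mathbb{F}_q\}$ with $a,b\in\mathbb{F}_q^2$, $b\neq 0$. *)

(* Defs.v *)
From mathcomp Require Import all_boot all_algebra.
From mathcomp Require Import finfield.
Set Implicit Arguments. Unset Strict Implicit. Unset Printing Implicit Defensive.
Import GRing.Theory.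
Local Open Scope ring_scope.

Definition line (F : finFieldType) (a b : F * F) : {set F * F} :=
  [set (a.1 + t * b.1, a.2 + t * b.2) | t : F].

Definition nikodym (F : finFieldType) (B : {set F * F}) : Prop :=
  forall x : F * F, x \notin B ->
    exists a b : F * F, b != (0, 0) /\ line a b :&: ~: B = [set x].

(* Main.v *)
Require Import Defs.
From mathcomp Require Import all_boot all_algebra finfield.
From mathcomp Require Import ring zify.
Set Implicit Arguments. Unset Strict Implicit. Unset Printing Implicit Defensive.
Import GRing.Theory.

Module Aux.

Section Lines.
Variable F : finFieldType.
Local Open Scope ring_scope.

Lemma line_card (a b : F * F) : b != (0, 0) -> #|line a b| = #|F|.
Proof.
move=> hb; rewrite /line card_imset //.
move=> t t' /= [] h1 h2.
have [e1|n1] := eqVneq b.1 0.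
  have n2 : b.2 != 0.
    by apply: contra hb => /eqP e2; case: b e1 e2 {h1 h2} => x y /= -> ->.
  by apply: (mulIf n2); apply: (addrI a.2).
by apply: (mulIf n1); apply: (addrI a.1).
Qed.

Lemma line_through (a b p p' : F * F) : p != p' -> p \in line a b -> p' \in line a b ->
  line a b = line p (p'.1 - p.1, p'.2 - p.2).
Proof.
move=> npp h1 h2; case/imsetP: h1 npp => t1 _ ->; case/imsetP: h2 => t2 _ -> npp.
have nt : t2 - t1 != 0.
  rewrite subr_eq0; apply: contra npp => /eqP e; by rewrite e.
apply/setP => z; apply/imsetP/imsetP => [[t _ ->]|[u _ ->]] /=.
  exists ((t - t1) / (t2 - t1)); first by [].
  congr pair; field; exact: nt.
exists (t1 + u * (t2 - t1)); first by [].
congr pair; ring.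
Qed.

Lemma lines_meet (a b a' b' : F * F) : line a b != line a' b' ->
  (#|line a b :&: line a' b'| <= 1)%nat.
Proof.
move=> nl; apply/card_le1_eqP => p p' /setIP [h1 h2] /setIP [h3 h4].
apply/eqP; apply: contraR nl => np.
by rewrite (line_through np h3 h1) (line_through np h4 h2).
Qed.
End Lines.


Lemma cs_nat (T : finType) (A : pred T) (f : T -> nat) :
  (\sum_(i in A) f i) ^ 2 <= #|A| * \sum_(i in A) f i ^ 2.
Proof.
rewrite -(leq_pmul2l (isT : 0 < 2)).
have E : forall i, \sum_(j in A) (f i ^ 2 + f j ^ 2) = #|A| * f i ^2 + \sum_(j in A) f j ^2.
  by move=> i; rewrite big_split /= sum_nat_const.
have -> : 2 * (#|A| * \sum_(i in A) f i ^ 2) =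
   \sum_(i in A) \sum_(j in A) (f i ^ 2 + f j ^ 2).
  rewrite (eq_bigr _ (fun i _ => E i)).
  by rewrite big_split /= -big_distrr /= sum_nat_const; lia.
rewrite -mulnn big_distrl big_distrr /=.
apply: leq_sum => i _; rewrite big_distrr big_distrr /=.
apply: leq_sum => j _; move: (f i) (f j) => a b; rewrite !expnS expn0 !muln1.
case: (leqP a b) => h; [move/subnK: h => <- | move/ltnW/subnK: h => <-]; move: (_ - _) => c; nia.

Qed.

Lemma arith n s p : n + s = p.+1 * p.+1 -> (s * p) ^ 2 <= n * (s * p + s * s) ->
  2 * (p.+1 * p.+1) <= 3 * n + 39 * p.+1.
Proof.
move=> e h.
case: (leqP p 12) => hp; first nia.
case: (leqP (2 * (p.+1 * p.+1)) (3 * n + 39 * p.+1)) => // hc; exfalso.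
have s0 : 0 < s by lia.
have h1 : s * p * p <= n * (p + s).
  rewrite -(leq_pmul2l s0).
  have E1 : s * (s * p * p) = (s * p) ^ 2 by rewrite expnS expn1; lia.
  have E2 : s * (n * (p + s)) = n * (s * p + s * s) by lia.
  by rewrite E1 E2.
have h2 : s * s <= p * p.+1 * p.+1 + s * p.+1.
  have e1 : n * p + s * p = p.+1 * p.+1 * p by rewrite -mulnDl e.
  have e2 : n * s + s * s = p.+1 * p.+1 * s by rewrite -mulnDl e.
  rewrite mulnDr in h1. clear -h1 e1 e2. lia.
have h3 : p.+1 * p.+1 + 39 * p.+1 < 3 * s by lia.
have h4 : (p.+1 * p.+1 + 39 * p.+1) * (p.+1 * p.+1 + 36 * p.+1) <= 3 * s * (3 * s - 3 * p.+1).
  apply: leq_mul; lia.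
have h5 : 9 * (s * s) - 9 * (s * p.+1) <= 9 * (p * p.+1 * p.+1) by lia.
have h6 : 3 * s * (3 * s - 3 * p.+1) = 9 * (s * s) - 9 * (s * p.+1).
  rewrite mulnBr; lia.
move: h4; rewrite h6 => h4.
have h7 := leq_trans h4 h5.
have h8 : p.+1 * p.+1 * (p.+1 * p.+1) <= (p.+1 * p.+1 + 39 * p.+1) * (p.+1 * p.+1 + 36 * p.+1).
  by apply: leq_mul; apply: leq_addr.
have h9 : 9 * p < p.+1 * p.+1.
  have := leq_mul hp (leqnn p).
  lia.
have h10 : 9 * p * (p.+1 * p.+1) < p.+1 * p.+1 * (p.+1 * p.+1).
  by rewrite ltn_pmul2r.
have h11 : 9 * (p * p.+1 * p.+1) = 9 * p * (p.+1 * p.+1) by rewrite !mulnA.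
move: h7; rewrite h11 => h7.
have := leq_trans h8 h7; rewrite leqNgt h10 //.
Qed.


Section Main.
Variable F : finFieldType.
Variable B : {set F * F}.
Hypothesis hB : nikodym B.
Local Open Scope ring_scope.

Definition isL (x : F * F) (L : {set F * F}) : bool :=
  [exists a, exists b, (b != (0, 0)) && (L == line a b)] && (L :&: ~: B == [set x]).

Definition LL (x : F * F) : {set F * F} := odflt set0 [pick L | isL x L].

Lemma LL_spec x : x \in ~: B -> exists a b, b != (0,0) /\ LL x = line a b /\ LL x :&: ~: B = [set x].
Proof.
rewrite inE => xB.
rewrite /LL; case: pickP => [L /andP [/existsP [a /existsP [b /andP [nb /eqP ->]]] /eqP e] | H] /=.
  by exists a, b.
have [a [b [nb e]]] := hB xB.
have := H (line a b); rewrite /isL e eqxx andbT => /negbT/negP [].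
by apply/existsP; exists a; apply/existsP; exists b; rewrite nb eqxx.
Qed.

Local Open Scope nat_scope.

Lemma LL_card x : x \in ~: B -> #|LL x :&: B| = #|F| - 1.
Proof.
move=> xS; have [a [b [nb [e1 e2]]]] := LL_spec xS.
have := cardsID B (LL x); rewrite setDE e2 cards1 e1 line_card //; lia.
Qed.

Lemma LL_meet x y : x \in ~: B -> y \in ~: B -> x != y -> #|LL x :&: LL y| <= 1.
Proof.
move=> xS yS nxy.
have [a [b [nb [e1 e2]]]] := LL_spec xS.
have [a' [b' [nb' [e1' e2']]]] := LL_spec yS.
rewrite e1 e1'; apply: lines_meet; apply: contra nxy => /eqP e.
by apply/eqP/set1_inj; rewrite -e2 -e2' e1 e1' e.
Qed.

Lemma sum_in (T : finType) (A C : {set T}) : \sum_(b in C) (b \in A : nat) = #|A :&: C|.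
Proof.
rewrite (eq_bigr (fun b => if b \in A then 1 else 0)); last by move=> b _; case: (b \in A).
rewrite -big_mkcondr sum1_card; apply: eq_card => b; rewrite !inE andbC //.
Qed.

Definition r b := \sum_(x in ~: B) (b \in LL x : nat).

Lemma sum_r : \sum_(b in B) r b = #|~: B| * (#|F| - 1).
Proof.
rewrite /r exchange_big /= -sum_nat_const; apply: eq_bigr => x xS.
by rewrite sum_in LL_card.
Qed.

Lemma sum_r2 : \sum_(b in B) r b ^ 2 <= #|~: B| * (#|F| - 1) + #|~: B| * #|~: B|.
Proof.
rewrite /r.
have -> : \sum_(b in B) (\sum_(x in ~: B) (b \in LL x : nat)) ^ 2 =
  \sum_(x in ~: B) \sum_(y in ~: B) #|(LL x :&: LL y) :&: B|.
  rewrite (eq_bigr (fun b => \sum_(x in ~: B) \sum_(y in ~: B) ((b \in LL x) * (b \in LL y)))); last first.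
    by move=> b _; rewrite -mulnn big_distrl; apply: eq_bigr => x _; rewrite big_distrr.
  rewrite exchange_big /=; apply: eq_bigr => x _; rewrite exchange_big /=; apply: eq_bigr => y _.
  rewrite -sum_in; apply: eq_bigr => b _; rewrite in_setI; by case: (b \in LL x); case: (b \in LL y).
rewrite -!sum_nat_const -big_split /=; apply: leq_sum => x xS.
rewrite (bigD1 x) //= setIid LL_card // leq_add2l.
apply: (@leq_trans (\sum_(i in ~: B | i != x) 1)).
  apply: leq_sum => y /andP [yS nyx].
  rewrite (leq_trans (subset_leq_card (subsetIl _ _))) //; apply: LL_meet => //.
  by rewrite eq_sym.
rewrite sum1_card; apply: subset_leq_card; apply/subsetP => y; by rewrite inE => /andP []; rewrite inE.
Qed.

End Main.

End Aux.
Import Aux.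

Lemma nat_main (F : finFieldType) (B : {set F * F}) : nikodym B ->
  2 * (#|F| * #|F|) <= 3 * #|B| + 39 * #|F|.
Proof.
move=> hB.
have q0 : 0 < #|F| by apply/card_gt0P; exists 0%R.
have := cs_nat (fun b => b \in B) (r (F:=F) B).
rewrite (sum_r hB) => h.
have {}h := leq_trans h (leq_mul (leqnn _) (sum_r2 hB)).
have e := cardsC B; rewrite card_prod in e.
move: e h; case: #|F| q0 => // p _; rewrite subSS subn0 => e h.
exact: arith e h.
Qed.

From Stdlib Require Import Reals Lra.

Theorem mainTheorem2 :
  exists C : R, (0 < C)%R /\
    forall (F : finFieldType) (B : {set F * F}),
      nikodym B ->
      (INR #|B| >= 2 * INR #|F| ^ 2 / 3 - C * INR #|F|)%R.
Proof.
exists 13%R; split; first lra.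
move=> F B hB.
have := le_INR _ _ (leP (nat_main hB)).
rewrite !mult_INR plus_INR !mult_INR.
have -> : INR 2 = 2%R by simpl; ring.
have -> : INR 3 = 3%R by simpl; ring.
have -> : INR 39 = 39%R by simpl; ring.
move=> h; simpl pow; rewrite Rmult_1_r.
move: h; move: (INR #|F| * INR #|F|)%R (INR #|F|) (INR #|B|) => x y z h; lra.
Qed.
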